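(* For $n\geq1$ let $\ell_n=\sqrt[n]{n!}$. Then, as $n\to\infty$, $$\frac{\ell_{n+2}}{\ell_{n+1}}+\frac{\ell_n}{\ell_{n+1}}=2-\frac{1}{2n^3}+o\Big(\frac1{n^3}\Big).$$ In particular, the sequence $a_n=\ell_{n+1}-\ell_n$ is eventually strictly decreasing. *)

(* Defs.v *)
From Stdlib Require Import Reals Arith.
Open Scope R_scope.

Definition ell (n : nat) : R := Rpower (INR (fact n)) (/ INR n).

Definition a_seq (n : nat) : R := ell (S n) - ell n.

(* Main.v *)
Require Import Defs.
From Coquelicot Require Import Coquelicot.
From Stdlib Require Import Reals Lra Lia ZArith List.
Import ListNotations.
Open Scope R_scope.

Lemma Dn_exp c k z : Derive_n (fun t => exp (c*t)) k z = c^k * exp(c*z).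
Proof.
revert z; induction k as [|k IH]; intro z.
- simpl; ring.
- simpl. rewrite (Derive_ext _ (fun t => c^k * exp (c*t)) _ IH).
  apply is_derive_unique. auto_derive; [easy| ring].
Qed.

Lemma exDn_exp c k z : ex_derive_n (fun t => exp (c*t)) k z.
Proof.
destruct k as [|k]; simpl; [easy|].
apply (ex_derive_ext (fun t => c^k * exp (c*t))).
- intro; now rewrite Dn_exp.
- auto_derive; easy.
Qed.

Lemma exp_tay c t : 0 < t -> exists z, 0 < z < t /\
  exp (c*t) = 1 + c*t + (c*t)^2/2 + (c*t)^3/6 + (c*t)^4/24 * exp (c*z).
Proof.
intro Ht.
destruct (Taylor_Lagrange (fun t => exp (c*t)) 3 0 t Ht) as [z [Hz E]].
{ intros; apply exDn_exp. }
exists z; split; [exact Hz|].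
rewrite E. cbn [sum_f_R0]. rewrite !Dn_exp.
  replace (INR (Factorial.fact 4)) with 24 by (simpl; ring).
  replace (INR (Factorial.fact 3)) with 6 by (simpl; ring).
  replace (INR (Factorial.fact 2)) with 2 by (simpl; ring).
  replace (INR (Factorial.fact 1)) with 1 by (simpl; ring).
  replace (INR (Factorial.fact 0)) with 1 by (simpl; ring).
  rewrite Rmult_0_r, exp_0. field.
Qed.

Lemma exp_pos_b t : 0 <= t <= 1 ->
  0 <= exp t - (1 + t + t^2/2 + t^3/6) <= t^4.
Proof.
intro H. destruct (Req_dec t 0) as [->|Hn].
{ rewrite exp_0. lra. }
destruct (exp_tay 1 t) as [z [Hz E]]; [lra|].
rewrite !Rmult_1_l in E. rewrite E.
assert (exp z <= 3).
{ apply Rle_trans with (exp 1). apply Rlt_le, exp_increasing; lra. apply exp_le_3. }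
assert (0 < exp z) by apply exp_pos.
assert (0 <= t^4) by (apply pow_le; lra).
split; nra.
Qed.

Lemma exp_neg_b t : 0 <= t <= 1 ->
  0 <= exp (-t) - (1 - t + t^2/2 - t^3/6) <= t^4.
Proof.
intro H. destruct (Req_dec t 0) as [->|Hn].
{ rewrite Ropp_0, exp_0. lra. }
destruct (exp_tay (-1) t) as [z [Hz E]]; [lra|].
replace (-t) with (-1*t) by ring. rewrite E.
assert (exp (-1*z) <= 1).
{ rewrite <- exp_0. destruct (Req_dec z 0); [subst; rewrite Rmult_0_r; lra|].
  apply Rlt_le, exp_increasing; lra. }
assert (0 < exp (-1*z)) by apply exp_pos.
assert (0 <= t^4) by (apply pow_le; lra).
split; nra.
Qed.

Lemma ln1p_b y : 0 <= y -> y - y^2/2 <= ln (1+y) <= y - y^2/2 + y^3/3.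
Proof.
intro Hy. split.
- destruct (MVT_gen (fun t => ln (1+t) - (t - t^2/2)) 0 y (fun t => t^2/(1+t))) as [c [Hc E]].
  + intros x Hx. rewrite Rmin_left, Rmax_right in Hx by lra.
    auto_derive. lra. field. lra.
  + intros x Hx. rewrite Rmin_left, Rmax_right in Hx by lra.
    apply continuity_pt_filterlim. apply (@ex_derive_continuous R_AbsRing R_NormedModule (fun t => ln (1+t) - (t - t^2/2))).
    auto_derive. lra.
  + rewrite Rmin_left, Rmax_right in Hc by lra.
    rewrite Rplus_0_r, ln_1 in E.
    assert (0 <= c^2/(1+c)) by (apply Rdiv_le_0_compat; nra).
    nra.
- destruct (MVT_gen (fun t => (t - t^2/2 + t^3/3) - ln (1+t)) 0 y (fun t => t^3/(1+t))) as [c [Hc E]].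
  + intros x Hx. rewrite Rmin_left, Rmax_right in Hx by lra.
    auto_derive. lra. field. lra.
  + intros x Hx. rewrite Rmin_left, Rmax_right in Hx by lra.
    apply continuity_pt_filterlim. apply (@ex_derive_continuous R_AbsRing R_NormedModule (fun t => (t - t^2/2 + t^3/3) - ln (1+t))).
    auto_derive. lra.
  + rewrite Rmin_left, Rmax_right in Hc by lra.
    rewrite Rplus_0_r, ln_1 in E.
    assert (0 <= c^3/(1+c)) by (apply Rdiv_le_0_compat; [apply pow_le|]; lra).
    nra.
Qed.
Fixpoint ev (l : list (R*nat*nat*nat)) (x s e : R) : R :=
  match l with
  | nil => 0
  | (c,i,k,j) :: t => c * x^i * s^k * e^j + ev t x s e
  end.
Definition Lq : list (R*nat*nat*nat) := [((4), 8%nat, 0%nat, 0%nat);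
  ((-4/3), 8%nat, 0%nat, 3%nat);
  ((30), 7%nat, 0%nat, 0%nat);
  ((-6), 7%nat, 0%nat, 3%nat);
  ((99), 6%nat, 0%nat, 0%nat);
  ((-4), 6%nat, 0%nat, 1%nat);
  ((4), 6%nat, 0%nat, 2%nat);
  ((-11), 6%nat, 0%nat, 3%nat);
  ((2967/16), 5%nat, 0%nat, 0%nat);
  ((41/8), 7%nat, 1%nat, 0%nat);
  ((5/4), 9%nat, 2%nat, 0%nat);
  ((1/6), 11%nat, 3%nat, 0%nat);
  ((-167/8), 5%nat, 0%nat, 1%nat);
  ((5/2), 7%nat, 1%nat, 1%nat);
  ((1/2), 9%nat, 2%nat, 1%nat);
  ((77/4), 5%nat, 0%nat, 2%nat);
  ((1/2), 7%nat, 1%nat, 2%nat);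
  ((-31/3), 5%nat, 0%nat, 3%nat);
  ((1703/8), 4%nat, 0%nat, 0%nat);
  ((261/8), 6%nat, 1%nat, 0%nat);
  ((6), 8%nat, 2%nat, 0%nat);
  ((1/2), 10%nat, 3%nat, 0%nat);
  ((-355/8), 4%nat, 0%nat, 1%nat);
  ((12), 6%nat, 1%nat, 1%nat);
  ((3/2), 8%nat, 2%nat, 1%nat);
  ((39), 4%nat, 0%nat, 2%nat);
  ((3/2), 6%nat, 1%nat, 2%nat);
  ((-5), 4%nat, 0%nat, 3%nat);
  ((1213/8), 3%nat, 0%nat, 0%nat);
  ((85), 5%nat, 1%nat, 0%nat);
  ((43/4), 7%nat, 2%nat, 0%nat);
  ((1/2), 9%nat, 3%nat, 0%nat);
  ((-97/2), 3%nat, 0%nat, 1%nat);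
  ((43/2), 5%nat, 1%nat, 1%nat);
  ((3/2), 7%nat, 2%nat, 1%nat);
  ((169/4), 3%nat, 0%nat, 2%nat);
  ((3/2), 5%nat, 1%nat, 2%nat);
  ((-1), 3%nat, 0%nat, 3%nat);
  ((1559/24), 2%nat, 0%nat, 0%nat);
  ((117), 4%nat, 1%nat, 0%nat);
  ((9), 6%nat, 2%nat, 0%nat);
  ((1/6), 8%nat, 3%nat, 0%nat);
  ((-57/2), 2%nat, 0%nat, 1%nat);
  ((18), 4%nat, 1%nat, 1%nat);
  ((1/2), 6%nat, 2%nat, 1%nat);
  ((51/2), 2%nat, 0%nat, 2%nat);
  ((1/2), 4%nat, 1%nat, 2%nat);
  ((61/4), 1%nat, 0%nat, 0%nat);
  ((92), 3%nat, 1%nat, 0%nat);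
  ((7/2), 5%nat, 2%nat, 0%nat);
  ((-17/2), 1%nat, 0%nat, 1%nat);
  ((7), 3%nat, 1%nat, 1%nat);
  ((8), 1%nat, 0%nat, 2%nat);
  ((3/2), 0%nat, 0%nat, 0%nat);
  ((83/2), 2%nat, 1%nat, 0%nat);
  ((1/2), 4%nat, 2%nat, 0%nat);
  ((-1), 0%nat, 0%nat, 1%nat);
  ((1), 2%nat, 1%nat, 1%nat);
  ((1), 0%nat, 0%nat, 2%nat);
  ((10), 1%nat, 1%nat, 0%nat);
  ((1), 0%nat, 1%nat, 0%nat)].

Lemma alg_id (n e r : R) : 0 < n ->
  let u := (n + e + (1 - /(2*(n+1)) + r)) / ((n+1)*(n+2)) in
  let v := (n + e) / (n*(n+1)) in
  u - v + (u^2+v^2)/2 + (u^3 - v^3)/6 + /(2*n^3)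
  = (/n)^4 * ev Lq (/n) (r*n^2) e / ((1+/n)^6 * (1+2*/n)^3).
Proof.
intros Hn u v. unfold u, v. simpl ev.
field. lra.
Qed.

Lemma exists_nat_ge x : exists k : nat, x <= INR k.
Proof.
destruct (Rle_or_lt x 0) as [H|H]; [exists 0%nat; simpl; lra|].
destruct (archimed x) as [H1 _].
assert (Hz : (0 < up x)%Z) by (apply lt_IZR; simpl; lra).
exists (Z.to_nat (up x)). rewrite INR_IZR_INZ, Z2Nat.id by lia. lra.
Qed.

Lemma ln_le_x1 x : 0 < x -> ln x <= x - 1.
Proof. intro H. pose proof (exp_ineq1_le (ln x)). rewrite exp_ln in H0; lra. Qed.

Lemma ln_4q x : 1 <= x -> ln x <= 4 * sqrt (sqrt x).
Proof.
intro H.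
set (w := sqrt x). set (q := sqrt w).
assert (Hw : 1 <= w) by (unfold w; rewrite <- sqrt_1; apply sqrt_le_1_alt; lra).
assert (Hq : 1 <= q) by (unfold q; rewrite <- sqrt_1; apply sqrt_le_1_alt; lra).
assert (E1 : x = w * w) by (unfold w; rewrite sqrt_sqrt; lra).
assert (E2 : w = q * q) by (unfold q; rewrite sqrt_sqrt; lra).
assert (ln x = 4 * ln q).
{ rewrite E1, E2, !ln_mult by nra. ring. }
pose proof (ln_le_x1 q). lra.
Qed.

Definition lf (m : nat) := ln (INR (fact m)).
Definition gg (m : nat) := INR m * ln (INR m + 1) - lf m.

Lemma fact_pos m : 0 < INR (fact m).
Proof. apply lt_0_INR, lt_O_fact. Qed.

Lemma lf_S m : lf (S m) = ln (INR m + 1) + lf m.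
Proof.
unfold lf. change (fact (S m)) with (S m * fact m)%nat.
rewrite mult_INR, ln_mult, S_INR; [reflexivity| |apply fact_pos].
try rewrite <- S_INR; apply lt_0_INR; lia.
Qed.

Lemma gg_S m : gg (S m) = gg m + (INR m + 1) * ln (1 + /(INR m + 1)).
Proof.
assert (Hm : 0 < INR m + 1) by (rewrite <- S_INR; apply lt_0_INR; lia).
unfold gg. rewrite lf_S, S_INR.
replace (INR m + 1 + 1) with ((INR m + 1) * (1 + /(INR m + 1))) by (field; lra).
rewrite ln_mult; [ring | lra |].
assert (0 < /(INR m + 1)) by (apply Rinv_0_lt_compat; lra). lra.
Qed.

Lemma gg_b m : - ln (INR m + 1) <= gg m - INR m <= 0.
Proof.
induction m as [|m IH].
- unfold gg, lf. simpl. rewrite Rplus_0_l, ln_1. lra.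
- rewrite gg_S, S_INR.
  assert (Hm : 0 < INR m + 1) by (rewrite <- S_INR; apply lt_0_INR; lia).
  set (y := /(INR m + 1)).
  assert (Hy : 0 < y <= 1).
  { unfold y; split; [apply Rinv_0_lt_compat; lra|].
    rewrite <- Rinv_1; apply Rinv_le_contravar; [lra|]. pose proof (pos_INR m); lra. }
  assert (Ey : (INR m + 1) * y = 1) by (unfold y; field; lra).
  destruct (ln1p_b y) as [L1 L2]; [lra|].
  assert (Hl : ln (INR m + 1 + 1) = ln (INR m + 1) + ln (1 + y)).
  { rewrite <- ln_mult by lra. f_equal. unfold y; field; lra. }
  rewrite Hl.
  assert (A1 : (INR m + 1) * ln (1 + y) <= 1).
  { apply Rle_trans with ((INR m + 1) * (y - y^2/2 + y^3/3)).
    apply Rmult_le_compat_l; lra. nra. }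
  assert (A2 : 1 - y/2 <= (INR m + 1) * ln (1 + y)).
  { apply Rle_trans with ((INR m + 1) * (y - y^2/2)).
    nra. apply Rmult_le_compat_l; lra. }
  nra.
Qed.

Lemma ell_exp m : ell m = exp (/ INR m * lf m).
Proof. reflexivity. Qed.

Lemma ell_ratio m : (1 <= m)%nat ->
  ell (S m) / ell m = exp (gg m / (INR m * (INR m + 1))).
Proof.
intro H. rewrite !ell_exp. unfold Rdiv at 1. rewrite <- exp_Ropp, <- exp_plus.
f_equal. rewrite lf_S, S_INR. unfold gg.
assert (0 < INR m) by (apply lt_0_INR; lia).
field. lra.
Qed.

Fixpoint sab (l : list (R*nat*nat*nat)) : R :=
  match l with nil => 0 | (c,_,_,_) :: t => Rabs c + sab t end.
Fixpoint jok (l : list (R*nat*nat*nat)) : bool :=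
  match l with nil => true | (_,_,_,j) :: t => Nat.leb j 3 && jok t end.

Lemma pow_01 x i : 0 <= x <= 1 -> 0 <= x ^ i <= 1.
Proof.
intro H; induction i as [|i IH]; simpl; [lra|]. nra.
Qed.

Lemma ev_bound l x s e E : 0 <= x <= 1 -> 0 <= s <= 1 -> Rabs e <= E ->
  jok l = true -> Rabs (ev l x s e) <= sab l * (1+E)^3.
Proof.
intros Hx Hs He. assert (HE : 0 <= E) by (pose proof (Rabs_pos e); lra).
induction l as [|[[[c i] k] j] t IH]; simpl; intro J.
- rewrite Rabs_R0. lra.
- apply andb_prop in J. destruct J as [J1 J2]. apply Nat.leb_le in J1.
  specialize (IH J2).
  eapply Rle_trans; [apply Rabs_triang|].
  rewrite Rmult_plus_distr_r. apply Rplus_le_compat; [|exact IH].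
  rewrite !Rabs_mult, <- !RPow_abs.
  destruct (pow_01 x i Hx). destruct (pow_01 s k Hs).
  rewrite (Rabs_pos_eq x), (Rabs_pos_eq s) by lra.
  assert (Hej : Rabs e ^ j <= (1+E)^3).
  { apply Rle_trans with ((1+E)^j).
    apply pow_incr; split; [apply Rabs_pos|lra].
    apply Rle_pow; [lra|lia]. }
  assert (0 <= Rabs e ^ j) by (apply pow_le, Rabs_pos).
  pose proof (Rabs_pos c).
  assert (x^i * s^k <= 1) by nra.
  assert (0 <= x^i * s^k) by nra.
  assert (Rabs c * (x^i * s^k) * Rabs e ^ j <= Rabs c * 1 * (1+E)^3).
  { apply Rmult_le_compat; try nra. }
  nra.
Qed.

Lemma key n : (1 <= n)%nat ->
  Rabs (ell (n + 2) / ell (n + 1) + ell n / ell (n + 1) - (2 - / (2 * INR n ^ 3)))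
  <= (/ INR n)^4 * (2 + sab Lq * (1 + 4 * sqrt (sqrt (INR n + 1)))^3).
Proof.
intro Hn.
replace (n + 2)%nat with (S (S n)) by lia.
replace (n + 1)%nat with (S n) by lia.
assert (Hpos : forall m, 0 < ell m) by (intro; apply exp_pos).
replace (ell n / ell (S n)) with (/ (ell (S n) / ell n))
  by (field; split; apply Rgt_not_eq, Hpos).
rewrite (ell_ratio (S n)) by lia. rewrite (ell_ratio n) by lia.
rewrite <- exp_Ropp.
rewrite gg_S, S_INR.
set (N := INR n).
assert (HN : 1 <= N) by (unfold N; apply (le_INR 1); lia).
set (X := / N).
assert (HX : X * N = 1) by (unfold X; field; lra).
assert (HX0 : 0 < X) by (unfold X; apply Rinv_0_lt_compat; lra).
assert (HX1 : X <= 1) by nra.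
set (y := / (N + 1)).
assert (Hy : y * (N+1) = 1) by (unfold y; field; lra).
assert (Hy0 : 0 < y) by (unfold y; apply Rinv_0_lt_compat; lra).
destruct (ln1p_b y) as [L1 L2]; [lra|].
set (G := gg n).
set (d := (N + 1) * ln (1 + y)).
set (e := G - N).
set (r := d - (1 - / (2 * (N + 1)))).
assert (Ey2 : / (2 * (N + 1)) = y / 2) by (unfold y; field; lra).
assert (Hr0 : 0 <= r).
{ unfold r, d. rewrite Ey2.
  assert ((N+1) * (y - y^2/2) <= (N+1) * ln (1+y)) by (apply Rmult_le_compat_l; lra).
  nra. }
assert (Hr1 : r <= y^2/3).
{ unfold r, d. rewrite Ey2.
  assert ((N+1) * ln (1+y) <= (N+1) * (y - y^2/2 + y^3/3)) by (apply Rmult_le_compat_l; lra).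
  nra. }
destruct (gg_b n) as [G1 G2]. fold N G in G1, G2.
destruct (gg_b (S n)) as [G3 G4]. rewrite gg_S, S_INR in G3, G4. fold N G y d in G3, G4.
assert (LN1 : ln (N + 1) <= N) by (pose proof (ln_le_x1 (N+1)); lra).
assert (LN2 : ln (N + 1 + 1) <= N + 1) by (pose proof (ln_le_x1 (N+1+1)); lra).
set (u := (N + e + (1 - / (2 * (N + 1)) + r)) / ((N + 1) * (N + 2))).
set (v := (N + e) / (N * (N + 1))).
assert (Eu : (G + d) / ((N + 1) * (N + 1 + 1)) = u).
{ unfold u, r, e. replace (N + 1 + 1) with (N + 2) by ring. f_equal. ring. }
assert (Ev : - (G / (N * (N + 1))) = - v).
{ unfold v, e. f_equal. f_equal. ring. }
rewrite Eu, Ev.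
assert (Hu : 0 <= u <= X).
{ unfold u. replace (N + e + (1 - / (2 * (N + 1)) + r)) with (G + d)
    by (unfold r, e; ring).
  split. apply Rdiv_le_0_compat; nra.
  apply Rmult_le_reg_r with ((N + 1) * (N + 2)); [nra|].
  unfold Rdiv. rewrite Rmult_assoc, Rinv_l by nra. nra. }
assert (Hv : 0 <= v <= X).
{ unfold v. replace (N + e) with G by (unfold e; ring).
  split. apply Rdiv_le_0_compat; nra.
  apply Rmult_le_reg_r with (N * (N + 1)); [nra|].
  unfold Rdiv. rewrite Rmult_assoc, Rinv_l by nra. nra. }
pose proof (alg_id N e r ltac:(lra)) as AI. cbv zeta in AI. fold u v in AI.
destruct (exp_pos_b u) as [U1 U2]; [lra|].
destruct (exp_neg_b v) as [V1 V2]; [lra|].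
assert (Hu4 : u^4 <= X^4) by (apply pow_incr; lra).
assert (Hv4 : v^4 <= X^4) by (apply pow_incr; lra).
set (Eb := 4 * sqrt (sqrt (N + 1))).
assert (He : Rabs e <= Eb).
{ unfold Eb. pose proof (ln_4q (N+1) ltac:(lra)). unfold e. rewrite Rabs_left1 by lra. lra. }
assert (Hs : 0 <= r * N^2 <= 1).
{ assert (0 <= N^2) by nra.
  split. nra. assert (y * N <= 1) by nra. assert (0 <= y * N) by nra.
  assert ((y * N)^2 <= 1) by nra.
  assert (r * N^2 <= y^2/3 * N^2) by (apply Rmult_le_compat_r; lra).
  nra. }
pose proof (ev_bound Lq X (r * N^2) e Eb ltac:(lra) Hs He eq_refl) as EB.
assert (Hden : 1 <= (1 + / N) ^ 6 * (1 + 2 * / N) ^ 3).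
{ fold X. assert (1 <= (1+X)^6) by (apply pow_R1_Rle; lra).
  assert (1 <= (1+2*X)^3) by (apply pow_R1_Rle; lra). nra. }
fold X in AI, Hden.
set (Q := ev Lq X (r * N ^ 2) e) in *.
assert (HQ : Rabs (X ^ 4 * Q / ((1 + X) ^ 6 * (1 + 2 * X) ^ 3)) <= X^4 * Rabs Q).
{ unfold Rdiv. rewrite !Rabs_mult, Rabs_inv.
  rewrite (Rabs_pos_eq (X^4)) by (apply pow_le; lra).
  rewrite (Rabs_pos_eq ((1 + X) ^ 6 * (1 + 2 * X) ^ 3)) by lra.
  assert (0 <= X^4) by (apply pow_le; lra).
  assert (/ ((1 + X) ^ 6 * (1 + 2 * X) ^ 3) <= 1).
  { rewrite <- Rinv_1. apply Rinv_le_contravar; lra. }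
  pose proof (Rabs_pos Q).
  rewrite <- (Rmult_1_r (X^4 * Rabs Q)) at 2.
  apply Rmult_le_compat_l; [nra|lra]. }
replace (exp u + exp (- v) - (2 - / (2 * N ^ 3)))
  with ((exp u - (1 + u + u^2/2 + u^3/6)) + (exp (-v) - (1 - v + v^2/2 - v^3/6))
        + (u - v + (u ^ 2 + v ^ 2) / 2 + (u ^ 3 - v ^ 3) / 6 + / (2 * N ^ 3))) by (set (P3 := / (2 * N ^ 3)); set (eu := exp u); set (ev' := exp (-v)); clearbody u v P3 eu ev'; clear; field).
rewrite AI.
eapply Rle_trans; [apply Rabs_triang|].
eapply Rle_trans; [apply Rplus_le_compat_r; apply Rabs_triang|].
rewrite (Rabs_pos_eq (exp u - _)) by lra.
rewrite (Rabs_pos_eq (exp (-v) - _)) by lra.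
assert (0 <= X^4) by (apply pow_le; lra).
assert (X^4 * Rabs Q <= X^4 * (sab Lq * (1 + Eb)^3)) by (apply Rmult_le_compat_l; lra).
nra.
Qed.

Lemma part1 : forall eps : R, 0 < eps ->
     exists N : nat, forall n : nat, (N <= n)%nat -> (1 <= n)%nat ->
       Rabs (ell (n + 2) / ell (n + 1) + ell n / ell (n + 1)
             - (2 - / (2 * INR n ^ 3)))
       <= eps / INR n ^ 3.
Proof.
intros eps Heps.
set (S0 := sab Lq).
assert (HS : 0 <= S0).
{ unfold S0. clear. induction Lq as [|[[[c i] k] j] t IH]; simpl; [lra|].
  pose proof (Rabs_pos c); lra. }
set (Q0 := 1 + (2 + 125 * S0) / eps).
assert (HQ0 : 1 <= Q0).
{ unfold Q0. assert (0 <= (2 + 125 * S0) / eps) by (apply Rdiv_le_0_compat; lra). lra. }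
destruct (exists_nat_ge (Q0^4)) as [k Hk].
exists k. intros n Hkn Hn.
eapply Rle_trans; [apply key; exact Hn|].
set (N := INR n) in *.
assert (HN : 1 <= N) by (unfold N; apply (le_INR 1); lia).
assert (HkN : Q0^4 <= N) by (eapply Rle_trans; [exact Hk| apply le_INR; lia]).
set (w := sqrt (N + 1)). set (q := sqrt w).
assert (Hw : 1 <= w) by (unfold w; apply Rle_trans with (sqrt 1); [rewrite sqrt_1; lra| apply sqrt_le_1_alt; lra]).
assert (Hq : 1 <= q) by (unfold q; apply Rle_trans with (sqrt 1); [rewrite sqrt_1; lra| apply sqrt_le_1_alt; lra]).
assert (E1 : N + 1 = w * w) by (unfold w; rewrite sqrt_sqrt; lra).
assert (E2 : w = q * q) by (unfold q; rewrite sqrt_sqrt; lra).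
assert (Eq4 : N + 1 = q^4) by (rewrite E1, E2; ring).
assert (HqQ : Q0 <= q).
{ destruct (Rle_or_lt Q0 q) as [H|H]; [exact H|].
  assert (q^4 <= Q0^4) by (apply pow_incr; lra). lra. }
assert (H5 : (1 + 4 * q)^3 <= 125 * q^3).
{ replace (125 * q^3) with ((5*q)^3) by ring. apply pow_incr; lra. }
assert (Hq3 : 1 <= q^3) by (apply pow_R1_Rle; lra).
assert (HC : 2 + S0 * (1 + 4 * q)^3 <= eps * N).
{ assert (S0 * (1 + 4 * q)^3 <= S0 * (125 * q^3)) by (apply Rmult_le_compat_l; lra).
  assert (eps * (q - 1) >= 2 + 125 * S0).
  { assert (q - 1 >= (2 + 125 * S0) / eps) by (unfold Q0 in HqQ; lra).
    apply Rle_ge. apply Rge_le in H0.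
    apply Rmult_le_compat_l with (r := eps) in H0; [|lra].
    replace (eps * ((2 + 125 * S0) / eps)) with (2 + 125 * S0) in H0 by (field; lra).
    lra. }
  assert (N >= q^3 * (q - 1)) by nra.
  assert (eps * N >= q^3 * (2 + 125 * S0)) by nra.
  nra. }
fold S0.
replace (eps / N^3) with ((/N)^4 * (eps * N)) by (field; lra).
apply Rmult_le_compat_l; [apply pow_le; apply Rlt_le, Rinv_0_lt_compat; lra|].
exact HC.
Qed.

Theorem mainTheorem5 :
  (* ell(n+2)/ell(n+1) + ell(n)/ell(n+1) = 2 - 1/(2 n^3) + o(1/n^3) *)
  (forall eps : R, 0 < eps ->
     exists N : nat, forall n : nat, (N <= n)%nat -> (1 <= n)%nat ->
       Rabs (ell (n + 2) / ell (n + 1) + ell n / ell (n + 1)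
             - (2 - / (2 * INR n ^ 3)))
       <= eps / INR n ^ 3)
  /\
  (* a_n = ell(n+1) - ell(n) is eventually strictly decreasing *)
  (exists N : nat, forall n : nat, (N <= n)%nat -> a_seq (S n) < a_seq n).
Proof.
split; [exact part1|].
destruct (part1 (1/4) ltac:(lra)) as [N0 HN0].
exists (Nat.max N0 1). intros n Hn.
specialize (HN0 n ltac:(lia) ltac:(lia)).
replace (n + 2)%nat with (S (S n)) in HN0 by lia.
replace (n + 1)%nat with (S n) in HN0 by lia.
assert (HN : 1 <= INR n) by (apply (le_INR 1); lia).
assert (H3 : 0 < INR n ^ 3) by (apply pow_lt; lra).
pose proof (Rle_abs (ell (S (S n)) / ell (S n) + ell n / ell (S n) - (2 - / (2 * INR n ^ 3)))) as HA.
assert (Hlt : ell (S (S n)) / ell (S n) + ell n / ell (S n) < 2).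
{ assert (/ (2 * INR n ^ 3) = 2 * (1/4 / INR n ^ 3)) by (field; lra).
  assert (0 < 1/4 / INR n ^3) by (apply Rdiv_lt_0_compat; lra). lra. }
unfold a_seq.
assert (Hp : 0 < ell (S n)) by apply exp_pos.
assert (ell (S (S n)) / ell (S n) + ell n / ell (S n) = (ell (S (S n)) + ell n) / ell (S n))
  by (field; lra).
rewrite H in Hlt.
apply (Rmult_lt_compat_r (ell (S n))) in Hlt; [|lra].
replace ((ell (S (S n)) + ell n) / ell (S n) * ell (S n)) with (ell (S (S n)) + ell n) in Hlt
  by (field; lra).
lra.
Qed.
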